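(* In the setting of OGP (with $\eta>0$, $\widetilde x_1\in C$, arbitrary predictions $\widehat x_t^*\in H$, and updates $\widetilde{x}_{t+1}=P_C(\widetilde{x}_t-\eta x_t^* )$, $x_t^*\in\partial\varphi_t(x_t)$, $x_{t+1}=P_C(\widetilde{x}_{t+1}-\eta\widehat{x}_{t+1}^* )$), for every $T\ge1$ and every $z_1,\dots,z_T\in C$, $$\sum_{t=1}^T\varphi_t(x_t)-\sum_{t=1}^T\varphi_t(z_t)\le \frac{\rho^2}{2\eta}+\frac{\rho}{\eta}\sum_{t=2}^T\|z_t-z_{t-1}\|+\frac{\eta}{2}\sum_{t=1}^T h_{\|x_t^*\|}\big(\|x_t^*-\widehat{x}_t^*\|\big),$$ where $h_\sigma(\delta)=\delta^2-(|\delta|-|\sigma|)_+^2$ and $(a)_+=\max\{a,0\}$.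
   Context: $H$ is a real Hilbert space; $C\subset H$ is nonempty, closed, convex with diameter $\rho=\sup_{x,y\in C}\|x-y\|<\infty$; $P_C$ is the metric projection onto $C$; each $\varphi_t$ is convex with $C\subset\operatorname{dom}\partial\varphi_t$, and $\partial$ is the subdifferential. *)

(* Defs.v *)
From HB Require Import structures.
From mathcomp Require Import all_boot all_order all_algebra.
From mathcomp Require Import all_classical all_reals all_analysis.
Set Implicit Arguments. Unset Strict Implicit. Unset Printing Implicit Defensive.
Import Order.TTheory GRing.Theory Num.Theory.
Import numFieldNormedType.Exports.
Local Open Scope classical_set_scope.
Local Open Scope ring_scope.

(* A real inner product on the normed module V inducing its norm:
   (V, ip) together with completeness of V is a real Hilbert space. *)
Definition is_inner_product (R : realType) (V : normedModType R)
  (ip : V -> V -> R) : Prop :=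
  [/\ (forall x y, ip x y = ip y x),
      (forall a x y z, ip (a *: x + y) z = a * ip x z + ip y z) &
      (forall x, ip x x = `|x| ^+ 2)].

Definition is_convex_set (R : realType) (V : normedModType R) (C : set V) : Prop :=
  forall x y (l : R), C x -> C y -> 0 <= l <= 1 -> C (l *: x + (1 - l) *: y).

Definition convex_efun (R : realType) (V : normedModType R)
  (f : V -> \bar R) : Prop :=
  (forall x, f x != -oo)%E /\
  forall (x y : V) (l : R), (0 <= l <= 1)%R ->
    (f (l *: x + (1 - l) *: y)%R <= l%:E * f x + (1 - l)%:E * f y)%E.

Definition subdiff (R : realType) (V : normedModType R)
  (ip : V -> V -> R) (f : V -> \bar R) (x : V) : set V :=
  [set g | f x \is a fin_num /\ forall y, (f x + (ip g (y - x)%R)%:E <= f y)%E].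

Definition dom_subdiff (R : realType) (V : normedModType R)
  (ip : V -> V -> R) (f : V -> \bar R) : set V :=
  [set x | subdiff ip f x !=set0].

Definition is_metric_projection (R : realType) (V : normedModType R)
  (C : set V) (P : V -> V) : Prop :=
  forall x, C (P x) /\ forall y, C y -> `|x - P x| <= `|x - y|.

Definition diameter (R : realType) (V : normedModType R) (C : set V) : R :=
  sup [set `|x - y| | x in C & y in C].

Definition posp (R : realType) (a : R) : R := Num.max a 0.

Definition hfun (R : realType) (sigma delta : R) : R :=
  delta ^+ 2 - (posp (`|delta| - `|sigma|)) ^+ 2.

(* Main.v *)
Require Import Defs.
From HB Require Import structures.
From mathcomp Require Import all_boot all_order all_algebra.
From mathcomp Require Import all_classical all_reals all_analysis.
From mathcomp Require Import ring lra.
Import Order.TTheory GRing.Theory Num.Theory.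
Import numFieldNormedType.Exports.
Local Open Scope classical_set_scope.
Local Open Scope ring_scope.

Section Scal.
Variable R : realType.
Lemma scal1 (a b S rho U F : R) : 0 <= a -> a <= b -> 0 <= S -> 0 <= rho -> 0 <= U -> U <= a ->
  S <= rho + U -> F <= b*S - S^+2/2 - rho^+2/2 -> F <= a*S - U^+2/2 -> F <= a*b - a^+2/2.
Proof.
move=> a0 ab S0 r0 U0 Ua SrU h1 h2.
have [Sa|aS] := lerP S a.
  nra.
have rS : (S - U) ^+ 2 <= rho ^+ 2 by nra.
have [a0'|ap] := eqVneq a 0.
  subst a. have U0e : U = 0 by lra. subst U. nra.
have ap' : 0 < a by rewrite lt_def ap a0.
rewrite leNgt; apply/negP => Hc.
have e : (S - a) * (a*b - a^+2/2 - (a*S - U^+2/2)) + a * (a*b - a^+2/2 - (b*S - S^+2/2 - (S-U)^+2/2)) = S * (a-U)^+2/2 by field.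
have h1' : a*b - a^+2/2 - (b*S - S^+2/2 - (S-U)^+2/2) < 0 by lra.
have h2' : a*b - a^+2/2 - (a*S - U^+2/2) < 0 by lra.
have p1 : (S - a) * (a*b - a^+2/2 - (a*S - U^+2/2)) <= 0.
  apply: mulr_ge0_le0; lra.
have p2 : a * (a*b - a^+2/2 - (b*S - S^+2/2 - (S-U)^+2/2)) < 0.
  by rewrite pmulr_rlt0.
have p3 : 0 <= S * (a-U)^+2/2.
  apply: divr_ge0 => //; apply: mulr_ge0 => //; apply: sqr_ge0.
lra.
Qed.

Lemma scal2 (eta sg dl S rho U F : R) : 0 < eta -> 0 <= sg -> 0 <= dl -> 0 <= S -> 0 <= rho ->
  0 <= U -> U <= eta * sg -> S <= rho + U ->
  F <= eta * dl * S - S^+2/2 - rho^+2/2 -> F <= eta * sg * S - U^+2/2 ->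
  F <= eta^+2/2 * hfun sg dl.
Proof.
move=> e0 s0 d0 S0 r0 U0 Ua SrU h1 h2.
rewrite /hfun /posp (ger0_norm s0) (ger0_norm d0).
have [ds|sd] := lerP dl sg.
  rewrite max_r; last by lra.
  have := sqr_ge0 (eta*dl - S); have := sqr_ge0 rho.
  have -> : (0:R) ^+ 2 = 0 by rewrite expr2 mulr0.
  move=> *. have -> : eta ^+ 2 / 2 * (dl ^+ 2 - 0) = (eta * dl)^+2/2 by field.
  nra.
rewrite max_l; last by lra.
have h : F <= eta * sg * (eta * dl) - (eta * sg) ^+ 2 / 2.
  apply: (scal1 (eta*sg) (eta*dl) S rho U F); try nra.
have -> : eta ^+ 2 / 2 * (dl ^+ 2 - (dl - sg) ^+ 2) = eta * sg * (eta * dl) - (eta * sg) ^+ 2 / 2 by field.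
by [].
Qed.
End Scal.

Section IP.
Variables (R : realType) (V : normedModType R) (ip : V -> V -> R).
Hypothesis hip : is_inner_product ip.

Lemma ipC x y : ip x y = ip y x. Proof. by case: hip. Qed.
Lemma ipn x : ip x x = `|x| ^+ 2. Proof. by case: hip. Qed.
Lemma ipL a x y z : ip (a *: x + y) z = a * ip x z + ip y z. Proof. by case: hip. Qed.
Lemma ip0l z : ip 0 z = 0.
Proof. have := ipL 1 0 0 z; rewrite scaler0 addr0 mul1r => h. lra. Qed.
Lemma ipDl x y z : ip (x + y) z = ip x z + ip y z.
Proof. by rewrite -[x in LHS]scale1r ipL mul1r. Qed.
Lemma ipZl a x z : ip (a *: x) z = a * ip x z.
Proof. by rewrite -[_ *: x]addr0 ipL ip0l addr0. Qed.
Lemma ipNl x z : ip (- x) z = - ip x z.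
Proof. by rewrite -scaleN1r ipZl mulN1r. Qed.
Lemma ipBl x y z : ip (x - y) z = ip x z - ip y z.
Proof. by rewrite ipDl ipNl. Qed.
Lemma ipDr x y z : ip z (x + y) = ip z x + ip z y.
Proof. by rewrite ipC ipDl !(ipC _ z). Qed.
Lemma ipZr a x z : ip z (a *: x) = a * ip z x.
Proof. by rewrite ipC ipZl ipC. Qed.
Lemma ipBr x y z : ip z (x - y) = ip z x - ip z y.
Proof. by rewrite ipC ipBl !(ipC _ z). Qed.
Lemma normB2 x y : `|x - y| ^+ 2 = `|x| ^+ 2 - 2 * ip x y + `|y| ^+ 2.
Proof. rewrite -!ipn ipBl !ipBr (ipC y x). ring. Qed.
Lemma normD2 x y : `|x + y| ^+ 2 = `|x| ^+ 2 + 2 * ip x y + `|y| ^+ 2.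
Proof. rewrite -!ipn ipDl !ipDr (ipC y x). ring. Qed.

Lemma ipCS x y : ip x y <= `|x| * `|y|.
Proof.
have [->|xn] := eqVneq x 0; first by rewrite ip0l normr0 mul0r.
have [->|yn] := eqVneq y 0; first by rewrite ipC ip0l normr0 mulr0.
have a0 : 0 < `|x| by rewrite normr_gt0.
have b0 : 0 < `|y| by rewrite normr_gt0.
set a := `|x| in a0 *. set b := `|y| in b0 *.
have h : 0 <= `|b *: x - a *: y| ^+ 2 by apply: sqr_ge0.
rewrite normB2 ipZl ipZr !normrZ in h.
rewrite (ger0_norm (ltW a0)) (ger0_norm (ltW b0)) -/a -/b in h.
have hp : 0 < a * b by rewrite mulr_gt0.
nra.
Qed.


Lemma proj_vi (C : set V) (P : V -> V) x w : is_convex_set C -> is_metric_projection C P ->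
  C w -> ip (x - P x) (w - P x) <= 0.
Proof.
move=> cvx hP Cw. have [CP hmin] := hP x.
set p := P x in CP hmin *. set c := ip (x - p) (w - p).
have Bge : 0 <= `|w - p| ^+ 2 by apply: sqr_ge0.
set B := `|w - p| ^+ 2 in Bge.
rewrite leNgt; apply/negP => c0.
have Bc : 0 < B + c by lra.
set l := c / (B + c).
have le : l * (B + c) = c by rewrite /l mulfVK // gt_eqF.
have l0 : 0 < l by rewrite /l divr_gt0.
have l1 : l <= 1 by rewrite /l ler_pdivrMr // mul1r; lra.
have Cy : C (l *: w + (1 - l) *: p) by apply: cvx => //; rewrite (ltW l0) l1.
have hm := hmin _ Cy.
have e : x - (l *: w + (1 - l) *: p) = (x - p) - l *: (w - p).
  by rewrite scalerBl scale1r scalerBr; rewrite !opprD !addrA opprK; congr (_ + _); rewrite addrAC -!addrA; congr (_ + _); rewrite addrC -addrA addNr addr0.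
rewrite e in hm.
have hm2 : `|x - p| ^+ 2 <= `|x - p - l *: (w - p)| ^+ 2.
  have := normr_ge0 (x - p). nra.
rewrite (normB2 (x - p)) ipZr normrZ (ger0_norm (ltW l0)) -/c in hm2.
have : l * (l * B - 2 * c) >= 0 by rewrite /B; nra.
nra.
Qed.


Lemma ipNr x z : ip z (- x) = - ip z x.
Proof. by rewrite ipC ipNl ipC. Qed.

Ltac ipx := rewrite ?(ipDl, ipBl, ipDr, ipBr, ipZl, ipZr, ipNl, ipNr).

Lemma step (C : set V) (P : V -> V) (eta : R) (p g m z : V) :
  is_convex_set C -> is_metric_projection C P -> C p -> C z -> 0 < eta ->
  eta * ip g (P (p - eta *: m) - z) <=
  (`|p - z| ^+ 2 - `|P (p - eta *: g) - z| ^+ 2) / 2 + eta ^+ 2 / 2 * hfun `|g| `|g - m|.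
Proof.
move=> cvx hP Cp Cz e0.
set q := P (p - eta *: g). set r := P (p - eta *: m).
have Cq : C q by case: (hP (p - eta *: g)).
have F1 : ip (p - eta *: g - q) (z - q) <= 0 := proj_vi C P (p - eta *: g) z cvx hP Cz.
have F2 : ip (p - eta *: m - r) (q - r) <= 0 := proj_vi C P (p - eta *: m) q cvx hP Cq.
have F3 : ip (p - eta *: g - q) (p - q) <= 0 := proj_vi C P (p - eta *: g) p cvx hP Cp.
have CS1 := ipCS (g - m) (r - q).
have CS2 := ipCS g (r - q).
have CS3 := ipCS g (p - q).
have Tr : `|r - q| <= `|r - p| + `|p - q| by apply: ler_distD.
have N1 : `|p - z| ^+ 2 = ip (p - z) (p - z) by rewrite ipn.
have N2 : `|q - z| ^+ 2 = ip (q - z) (q - z) by rewrite ipn.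
have N3 : `|r - q| ^+ 2 = ip (r - q) (r - q) by rewrite ipn.
have N4 : `|r - p| ^+ 2 = ip (r - p) (r - p) by rewrite ipn.
have N5 : `|p - q| ^+ 2 = ip (p - q) (p - q) by rewrite ipn.
set S := `|r - q| in CS1 CS2 Tr N3 *.
set rho := `|r - p| in Tr N4 *.
set U := `|p - q| in CS3 Tr N5 *.
set sg := `|g| in CS2 CS3 *.
set dl := `|g - m| in CS1 *.
have S0 : 0 <= S by apply: normr_ge0.
have r0 : 0 <= rho by apply: normr_ge0.
have U0 : 0 <= U by apply: normr_ge0.
have sg0 : 0 <= sg by apply: normr_ge0.
have dl0 : 0 <= dl by apply: normr_ge0.
rewrite N1 N2.
move: F1 F2 F3 CS1 CS2 CS3 N3 N4 N5; ipx => F1 F2 F3 CS1 CS2 CS3 N3 N4 N5.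
have s01 := ipC p q.
have s02 := ipC p r.
have s03 := ipC p z.
have s04 := ipC p g.
have s05 := ipC p m.
have s12 := ipC q r.
have s13 := ipC q z.
have s14 := ipC q g.
have s15 := ipC q m.
have s23 := ipC r z.
have s24 := ipC r g.
have s25 := ipC r m.
have s34 := ipC z g.
have s35 := ipC z m.
have s45 := ipC g m.
rewrite ?s01 ?s02 ?s03 ?s04 ?s05 ?s12 ?s13 ?s14 ?s15 ?s23 ?s24 ?s25 ?s34 ?s35 ?s45 in F1 F2 F3 CS1 CS2 CS3 N3 N4 N5 *.
have UU : U <= eta * sg.
  have hU : U ^+ 2 <= eta * (sg * U) by rewrite N5; nra.
  have es : 0 <= eta * sg by rewrite mulr_ge0 // ltW.
  rewrite leNgt; apply/negP => hc.
  have hU' : 0 < U - eta * sg by lra.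
  have : 0 < U * (U - eta * sg) by rewrite mulr_gt0 //; lra.
  nra.
suff key : eta * ip g (r - z) - (ip (p - z) (p - z) - ip (q - z) (q - z)) / 2 <=
  eta ^+ 2 / 2 * hfun sg dl.
  by move: key; ipx; rewrite ?s01 ?s02 ?s03 ?s04 ?s05 ?s12 ?s13 ?s14 ?s15 ?s23 ?s24 ?s25 ?s34 ?s35 ?s45; lra.
apply: (@scal2 R eta sg dl S rho U _ e0 sg0 dl0 S0 r0 U0 UU Tr); ipx; rewrite ?s01 ?s02 ?s03 ?s04 ?s05 ?s12 ?s13 ?s14 ?s15 ?s23 ?s24 ?s25 ?s34 ?s35 ?s45.
  nra.
nra.
Qed.

End IP.

Section Tel.
Variables (R : realType) (V : normedModType R).

Lemma telescope (xt z : nat -> V) (D : R) (T : nat) :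
  (forall t, (1 <= t <= T)%N -> `|xt t - z t| <= D) ->
  (forall t, (1 <= t <= T)%N -> `|xt t.+1 - z t| <= D) ->
  (forall t, (2 <= t <= T)%N -> `|xt t - z t.-1| <= D) ->
  forall n, (1 <= n <= T)%N ->
  \sum_(1 <= t < n.+1) (`|xt t - z t| ^+ 2 - `|xt t.+1 - z t| ^+ 2)
  <= D ^+ 2 + 2 * D * (\sum_(2 <= t < n.+1) `|z t - z t.-1|) - `|xt n.+1 - z n| ^+ 2.
Proof.
move=> h1 h2 h3; elim => [//|n IH] /andP[n1 nT].
have D0 : 0 <= D.
  apply: le_trans (h1 1%N _); first by apply: normr_ge0.
  by rewrite /=; apply: leq_trans nT.
have [n0|npos] := eqVneq n 0%N.
  subst n. rewrite big_nat1 big_geq // mulr0 addr0.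
  have hh := h1 1%N nT.
  have := normr_ge0 (xt 1%N - z 1%N). nra.
have n1' : (1 <= n)%N by rewrite lt0n.
have IH' := IH (introT andP (conj n1' (ltnW nT))).
rewrite (@big_nat_recr _ _ _ n.+1 1%N) // (@big_nat_recr _ _ _ n.+1 2%N) //=.
set A := `|xt n.+1 - z n.+1|. set B := `|xt n.+1 - z n|. set c := `|z n.+1 - z n|.
have hA : A <= D by apply: h1; rewrite nT andbT.
have hB : B <= D by apply: h3; rewrite nT andbT.
have hAB : A <= B + c by rewrite /A /B /c (distrC (z n.+1)); apply: ler_distD.
have A0 : 0 <= A by apply: normr_ge0.
have B0 : 0 <= B by apply: normr_ge0.
have c0 : 0 <= c by apply: normr_ge0.
have k1 : (A + B) * (A - B) <= (A + B) * c by apply: ler_wpM2l; lra.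
have k2 : (A + B) * c <= (2 * D) * c by apply: ler_wpM2r => //; lra.
have k3 : A ^+ 2 - B ^+ 2 = (A + B) * (A - B) by ring.
move: IH'. rewrite -/B. nra.
Qed.
End Tel.

Theorem corollary1 (R : realType) (V : completeNormedModType R)
  (ip : V -> V -> R) (C : set V) (P : V -> V) (phi : nat -> V -> \bar R)
  (eta : R) (xt x xs xh : nat -> V) (T : nat) (z : nat -> V) :
  is_inner_product ip ->
  C !=set0 -> closed C -> is_convex_set C ->
  (exists M : R, forall u v, C u -> C v -> `|u - v| <= M) ->
  is_metric_projection C P ->
  (forall t, convex_efun (phi t)) ->
  (forall t, C `<=` dom_subdiff ip (phi t)) ->
  0 < eta ->
  C (xt 1%N) ->
  (forall t, (1 <= t)%N -> subdiff ip (phi t) (x t) (xs t)) ->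
  (forall t, (1 <= t)%N -> xt t.+1 = P (xt t - eta *: xs t)) ->
  (forall t, (1 <= t)%N -> x t = P (xt t - eta *: xh t)) ->
  (1 <= T)%N ->
  (forall t, (1 <= t <= T)%N -> C (z t)) ->
  ((\sum_(1 <= t < T.+1) phi t (x t)) - (\sum_(1 <= t < T.+1) phi t (z t))
   <= ((diameter C) ^+ 2 / (2 * eta)
       + (diameter C) / eta * (\sum_(2 <= t < T.+1) `|z t - z t.-1|)
       + eta / 2 * (\sum_(1 <= t < T.+1) hfun `|xs t| `|xs t - xh t|))%:E)%E.
Proof.
move=> hip Cn Ccl cvx [M hM] hP hcv hdom e0 Cx1 hsub hxt hx T1 Cz.
set D := diameter C.
have hD : forall u v, C u -> C v -> `|u - v| <= D.
  move=> u v Cu Cv; apply: ub_le_sup.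
    by exists M => _ [a Ca [b Cb <-]]; apply: hM.
  by exists u => //; exists v.
have Cxt : forall t, (1 <= t)%N -> C (xt t).
  elim => [//|[|t] IH _]; first by [].
  by rewrite hxt //; case: (hP (xt t.+1 - eta *: xs t.+1)).
have Cx : forall t, (1 <= t)%N -> C (x t).
  by move=> t t1; rewrite hx //; case: (hP (xt t - eta *: xh t)).
set a := fun t => fine (phi t (x t)).
set b := fun t => fine (phi t (z t)).
have fa : forall t, (1 <= t)%N -> phi t (x t) = (a t)%:E.
  by move=> t t1; rewrite /a fineK //; case: (hsub t t1).
have fb : forall t, (1 <= t <= T)%N -> phi t (z t) = (b t)%:E.
  move=> t /andP[t1 tT]; rewrite /b fineK //.
  by have [g [hg _]] := hdom t (z t) (Cz t (introT andP (conj t1 tT))).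
rewrite (eq_big_nat _ _ (F2 := fun t => (a t)%:E)); last first.
  by move=> t /andP[t1 _]; rewrite fa.
rewrite (eq_big_nat _ _ (F1 := fun t => phi t (z t)) (F2 := fun t => (b t)%:E)); last first.
  by move=> t /andP[t1 tT]; rewrite fb // t1.
rewrite !sumEFin -EFinB lee_fin -sumrB.
set h := fun t => hfun `|xs t| `|xs t - xh t|.
set d := fun t => `|xt t - z t| ^+ 2 - `|xt t.+1 - z t| ^+ 2.
have per : forall t, (1 <= t < T.+1)%N -> a t - b t <= d t / (2 * eta) + eta / 2 * h t.
  move=> t /andP[t1 tT]; rewrite ltnS in tT.
  have [_ hs] := hsub t t1.
  have := hs (z t). rewrite fa // fb ?t1 // -EFinD lee_fin => hab.
  have st := @step R V ip hip C P eta (xt t) (xs t) (xh t) (z t) cvx hP (Cxt t t1) (Cz t (introT andP (conj t1 tT))) e0.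
  rewrite -hx // -hxt // in st.
  have e1 : ip (xs t) (z t - x t) = - ip (xs t) (x t - z t).
    by rewrite !(@ipBr R V ip hip); ring.
  rewrite e1 in hab.
  have : eta * (a t - b t) <= eta * (d t / (2 * eta) + eta / 2 * h t).
    have -> : eta * (d t / (2 * eta) + eta / 2 * h t) = (d t) / 2 + eta ^+ 2 / 2 * h t.
      by field; rewrite gt_eqF.
    rewrite /d /h; nra.
  by rewrite ler_pM2l.
apply: le_trans (ler_sum_nat per) _.
rewrite big_split /= -mulr_suml -mulr_sumr.
have tel := @telescope R V xt z D T.
have g1 : forall t, (1 <= t <= T)%N -> `|xt t - z t| <= D.
  by move=> t /andP[t1 tT]; apply: hD; [apply: Cxt | apply: Cz; rewrite t1].
have g2 : forall t, (1 <= t <= T)%N -> `|xt t.+1 - z t| <= D.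
  move=> t /andP[t1 tT]; apply: hD; first by apply: Cxt.
  by apply: Cz; rewrite tT andbT.
have g3 : forall t, (2 <= t <= T)%N -> `|xt t - z t.-1| <= D.
  move=> t /andP[t1 tT]; apply: hD; first by apply: Cxt; apply: ltnW.
  apply: Cz. apply/andP; split; first by rewrite -ltnS (ltn_predK t1).
  by apply: leq_trans tT; apply: leq_pred.
have hh := tel g1 g2 g3 T (introT andP (conj T1 (leqnn T))).
have tel' : \sum_(1 <= t < T.+1) d t <= D ^+ 2 + 2 * D * (\sum_(2 <= t < T.+1) `|z t - z t.-1|).
  apply: le_trans hh _.
  have : 0 <= `|xt T.+1 - z T| ^+ 2 by apply: sqr_ge0. lra.
have -> : D ^+ 2 / (2 * eta) + D / eta * \sum_(2 <= t < T.+1) `|z t - z t.-1| =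
  (D ^+ 2 + 2 * D * (\sum_(2 <= t < T.+1) `|z t - z t.-1|)) / (2 * eta).
  by field; rewrite gt_eqF.
rewrite /h lerD2r.
apply: ler_wpM2r => //.
by rewrite invr_ge0 mulr_ge0 // ltW.
Qed.
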